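(* Let $t>204$ be an integer and $P(x,y)=x^{4}+4tx^{3}y-6tx^{2}y^{2}-4t^{2}xy^{3}+t^{2}y^{4}$. Fix complex numbers $\alpha,\beta$ with $\alpha^4=1+i\sqrt t$ and $\beta^4=-1+i\sqrt t$, and for integers $x,y$ put $\xi(x,y)=\sqrt2\,\alpha\,(x-i\sqrt t\,y)$, $\eta(x,y)=\sqrt2\,\beta\,(x+i\sqrt t\,y)$ and $z(x,y)=1-\left(\eta(x,y)/\xi(x,y)\right)^4$. Suppose $(x,y)$ is a pair of positive integers with $0<P(x,y)\le t^2$ and $xy>64t^3$, and let $\omega_j\in\{1,i,-1,-i\}$ satisfy $$\left|\omega_j-\frac{\eta(x,y)}{\xi(x,y)}\right|=\min_{0\le k\le 3}\left|e^{k\pi i/2}-\frac{\eta(x,y)}{\xi(x,y)}\right|.$$ Then $\left|\omega_j-\frac{\eta(x,y)}{\xi(x,y)}\right|<\frac{\pi}{12}\,|z(x,y)|$.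
   Context: Note $\xi^4=4(\sqrt{-t}+1)(x-\sqrt{-t}y)^4$, $\eta^4=4(\sqrt{-t}-1)(x+\sqrt{-t}y)^4$ and $P=\frac18(\xi^4-\eta^4)$, with $\sqrt{-t}=i\sqrt t$. *)

(* Defs.v *)
From HB Require Import structures.
From mathcomp Require Import all_boot all_order all_algebra.
From mathcomp Require Import complex.
From mathcomp Require Import reals trigo.
Set Implicit Arguments. Unset Strict Implicit. Unset Printing Implicit Defensive.
Import Order.TTheory GRing.Theory Num.Theory.
Local Open Scope ring_scope.
Local Open Scope complex_scope.

Definition Pform (t x y : int) : int :=
  x ^+ 4 + 4 * t * x ^+ 3 * y - 6 * t * x ^+ 2 * y ^+ 2
  - 4 * t ^+ 2 * x * y ^+ 3 + t ^+ 2 * y ^+ 4.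

Section Cx.
Variable R : realType.

Definition sqrtt (t : int) : R[i] := (Num.sqrt (t%:~R : R))%:C.
Definition sqrt2C : R[i] := (Num.sqrt (2 : R))%:C.

Definition xiC (t : int) (alpha : R[i]) (x y : int) : R[i] :=
  sqrt2C * alpha * ((x%:~R : R)%:C - 'i * sqrtt t * (y%:~R : R)%:C).
Definition etaC (t : int) (beta : R[i]) (x y : int) : R[i] :=
  sqrt2C * beta * ((x%:~R : R)%:C + 'i * sqrtt t * (y%:~R : R)%:C).
Definition zC (t : int) (alpha beta : R[i]) (x y : int) : R[i] :=
  1 - (etaC t beta x y / xiC t alpha x y) ^+ 4.
End Cx.

(* Main.v *)
Require Import Defs.
From HB Require Import structures.
From mathcomp Require Import all_boot all_order all_algebra.
From mathcomp Require Import complex.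
From mathcomp Require Import all_classical all_reals all_analysis.
From mathcomp Require Import ring lra.
Set Implicit Arguments. Unset Strict Implicit. Unset Printing Implicit Defensive.
Import Order.TTheory GRing.Theory Num.Theory numFieldNormedType.Exports.
Local Open Scope ring_scope.

Local Open Scope complex_scope.
Section S.
Variable R : realType.

Lemma cos151_gt0 : 0 < cos (151 / 100 : R).
Proof.
set c : R := 151 / 100.
have h := @cvg_cos_coeff' R c; rewrite -(cvg_lim (@Rhausdorff R) h).
apply: (@lt_trans _ _ (\sum_(0 <= i < 4) cos_coeff' c i)).
  rewrite !big_nat_recr//= big_nil add0r /cos_coeff'.
  rewrite -!exprnP /= !factS fact0.
  rewrite /c; lra.
apply: lt_sum_lim_series; [by move/cvgP in h|move=> d].
rewrite /cos_coeff' -!exprnP.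
set k := (4 + d.*2)%N.
have ok : ~~ odd k by rewrite /k oddD odd_double.
rewrite addnS -/k.
have s1 : (-1) ^+ k = 1 :> R by rewrite -signr_odd (negbTE ok).
have s2 : (-1) ^+ k.+1 = -1 :> R by rewrite exprS s1 mulr1.
rewrite s1 s2 mul1r mulN1r.
rewrite doubleS.
have hm : (8 <= k.*2)%N by rewrite /k doubleD.
move: hm; move: (k.*2) => m hm.
rewrite factS factS !natrM !exprS.
set F := m`!%:R; set X := c ^+ m.
have F0 : 0 < F by rewrite ltr0n fact_gt0.
have X0 : 0 < X by rewrite exprn_gt0 // /c; lra.
set a : R := (m.+2)%:R. set b : R := (m.+1)%:R.
have ha : 10 <= a by rewrite /a (ler_nat _ 10).
have hb : 9 <= b by rewrite /b (ler_nat _ 9).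
rewrite !invfM.
have -> : X / F + - (c * (c * X)) * (a^-1 * (b^-1 / F)) = (X / F) * (1 - c * c / (a * b)).
  by rewrite invfM; field; apply/and3P; split; apply/lt0r_neq0; lra.
have hq : c * c / (a * b) < 1.
  have ab : 90 <= a * b by nra.
  rewrite ltr_pdivrMr; last lra.
  rewrite mul1r /c; lra.
have p : 0 < X / F by apply divr_gt0.
apply: mulr_gt0 => //. by rewrite subr_gt0.
Qed.

Lemma pi_gt302 : 302 / 100 < (pi : R).
Proof.
rewrite ltNge; apply/negP => hp.
have hc : pi / 2 <= 151 / 100 :> R by lra.
have hpi := @pi_ge2 R.
have c0 := cos151_gt0.
move: hc; rewrite le_eqVlt => /orP[/eqP e|hlt].
  by move: c0; rewrite -e cos_pihalf ltxx.
have i1 : (pi / 2 : R) \in `[0, pi] by rewrite in_itv /=; apply/andP; split; lra.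
have i2 : (151 / 100 : R) \in `[0, pi] by rewrite in_itv /=; apply/andP; split; lra.
have := ltr_cos i1 i2. rewrite hlt cos_pihalf => h.
by move: c0; rewrite ltNge (ltW h).
Qed.
End S.
Section S2.
Variable R : realType.
Local Notation Re := (@complex.Re R).
Local Notation Im := (@complex.Im R).
Hypothesis pi_gt : 302 / 100 < (pi : R).

Lemma key (a b : R) : a ^+ 2 + b ^+ 2 = 1 -> b ^+ 2 <= a ^+ 2 -> 0 <= a ->
  0 < a ^+ 2 * b ^+ 2 -> 16 * (a ^+ 2 * b ^+ 2) <= 1 / 100 ->
  (1 - a) ^+ 2 + b ^+ 2 < (pi / 12) ^+ 2 * (16 * (a ^+ 2 * b ^+ 2)).
Proof.
move=> h1 h2 h3 h4 h5.
have hb2 : b ^+ 2 <= 1 / 800 by nra.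
have ha2 : 799 / 800 <= a ^+ 2 by lra.
have ha : 999 / 1000 <= a by nra.
have ha1 : a < 1.
  have hb0 : 0 < b ^+ 2 by nra.
  nra.
have hp := pi_gt. have hp0 : 0 <= (pi : R) by lra.
have hp2 : 912 / 100 <= (pi : R) ^+ 2 by nra.
have hm : 18 < pi ^+ 2 * (a ^+ 2 * (1 + a)).
  have : 912 / 100 * (799 / 800 * (1999 / 1000)) <= (pi : R) ^+ 2 * (a ^+ 2 * (1 + a)).
    apply: ler_pM; [lra|lra|lra|].
    apply: ler_pM; lra.
  lra.
have e1 : (1 - a) ^+ 2 + b ^+ 2 = 2 * (1 - a) by nra.
have e2 : (pi / 12) ^+ 2 * (16 * (a ^+ 2 * b ^+ 2)) =
   (1 - a) * ((pi ^+ 2 * (a ^+ 2 * (1 + a))) / 9).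
  have eb : b ^+ 2 = (1 - a) * (1 + a) by nra.
  by rewrite eb; field.
rewrite e1 e2.
have : 0 < 1 - a by lra.
nra.
Qed.

Lemma normle (c d : R[i]) : `|c| <= `|d| ->
  Re c ^+ 2 + Im c ^+ 2 <= Re d ^+ 2 + Im d ^+ 2.
Proof.
by rewrite !normc_def lecR ler_sqrt ?addr_ge0 ?sqr_ge0.
Qed.

Lemma normlt (c d : R[i]) (k : R) : 0 <= k ->
  Re c ^+ 2 + Im c ^+ 2 < k ^+ 2 * (Re d ^+ 2 + Im d ^+ 2) ->
  `|c| < k%:C * `|d|.
Proof.
move=> hk h; rewrite !normc_def -rmorphM ltcR.
have -> : k = Num.sqrt (k ^+ 2) by rewrite sqrtr_sqr ger0_norm.
rewrite -sqrtrM ?sqr_ge0 //.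
by rewrite ltr_sqrt // (le_lt_trans _ h) // addr_ge0 // sqr_ge0.
Qed.

Lemma normsq (c : R[i]) : Re c ^+ 2 + Im c ^+ 2 = Num.sqrt (Re c ^+ 2 + Im c ^+ 2) ^+ 2.
Proof. by rewrite sqr_sqrtr // addr_ge0 // sqr_ge0. Qed.

Lemma final (w om : R[i]) : `|w| = 1 -> om \in [:: 1; 'i; -1; - 'i] ->
  (forall k : 'I_4, `|om - w| <= `|'i ^+ k - w|) ->
  0 < `|1 - w ^+ 4| -> `|1 - w ^+ 4| <= (1 / 10)%:C ->
  `|om - w| < (pi / 12 : R)%:C * `|1 - w ^+ 4|.
Proof.
move=> hw hom hmin hz0 hz1.
have k0 := hmin (@Ordinal 4 0 isT).
have k1 := hmin (@Ordinal 4 1 isT).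
have k2 := hmin (@Ordinal 4 2 isT).
have k3 := hmin (@Ordinal 4 3 isT).
rewrite normc_def ltcR in hz0. rewrite normc_def lecR in hz1.
rewrite normc_def in hw. move: hw hz0 hz1.
clear hmin; case: w k0 k1 k2 k3 => a b k0 k1 k2 k3 hw hz0 hz1.
have hab : a ^+ 2 + b ^+ 2 = 1.
  case: hw => /= hw; by rewrite (normsq (a +i* b)) /= hw expr1n.
set Z := Re (1 - (a +i* b) ^+ 4) ^+ 2 + Im (1 - (a +i* b) ^+ 4) ^+ 2 in hz0 hz1.
have hZ : Z = 16 * (a ^+ 2 * b ^+ 2).
  have -> : Z = (1 - (a ^+ 2 + b ^+ 2) ^+ 2) ^+ 2 + 16 * (a ^+ 2 * b ^+ 2).
    by rewrite /Z !exprS expr0 /=; ring.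
  by rewrite hab expr1n subrr expr0n /= add0r.
have hZ0 : 0 < a ^+ 2 * b ^+ 2.
  have : 0 < Z by rewrite -sqrtr_gt0.
  rewrite hZ; lra.
have hZ1 : 16 * (a ^+ 2 * b ^+ 2) <= 1 / 100.
  have Z0 : 0 <= Z by rewrite /Z addr_ge0 ?sqr_ge0.
  have eZ : Z = (Num.sqrt Z) ^+ 2 by rewrite sqr_sqrtr.
  have sZ : 0 <= Num.sqrt Z by apply: sqrtr_ge0.
  have hz1p : Num.sqrt Z <= 1 / 10 := hz1.
  rewrite -hZ eZ; nra.
have hp := pi_gt.
move/normle in k0; move/normle in k1; move/normle in k2; move/normle in k3.
move: hom k0 k1 k2 k3; rewrite !inE => /or4P[] /eqP -> k0 k1 k2 k3;
  apply: normlt; (try lra); rewrite -/Z hZ /= in k0 k1 k2 k3 *.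
- have h1 : b ^+ 2 <= a ^+ 2 by nra.
  have h2 : 0 <= a by nra.
  have := key hab h1 h2 hZ0 hZ1. nra.
- have h1 : a ^+ 2 <= b ^+ 2 by nra.
  have h2 : 0 <= b by nra.
  have hab' : b ^+ 2 + a ^+ 2 = 1 by lra.
  have hZ0' : 0 < b ^+ 2 * a ^+ 2 by rewrite mulrC.
  have hZ1' : 16 * (b ^+ 2 * a ^+ 2) <= 1 / 100 by rewrite [b ^+ 2 * _]mulrC.
  have := key hab' h1 h2 hZ0' hZ1'. nra.
- have h1 : b ^+ 2 <= (- a) ^+ 2 by nra.
  have h2 : 0 <= - a by nra.
  have hab' : (- a) ^+ 2 + b ^+ 2 = 1 by rewrite sqrrN.
  have hZ0' : 0 < (- a) ^+ 2 * b ^+ 2 by rewrite sqrrN.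
  have hZ1' : 16 * ((- a) ^+ 2 * b ^+ 2) <= 1 / 100 by rewrite sqrrN.
  have := key hab' h1 h2 hZ0' hZ1'. nra.
- have h1 : a ^+ 2 <= (- b) ^+ 2 by nra.
  have h2 : 0 <= - b by nra.
  have hab' : (- b) ^+ 2 + a ^+ 2 = 1 by rewrite sqrrN; lra.
  have hZ0' : 0 < (- b) ^+ 2 * a ^+ 2 by rewrite sqrrN mulrC.
  have hZ1' : 16 * ((- b) ^+ 2 * a ^+ 2) <= 1 / 100 by rewrite sqrrN [b ^+ 2 * _]mulrC.
  have := key hab' h1 h2 hZ0' hZ1'. nra.
Qed.

End S2.
Lemma hPR (R : realType) (t x y : int) : ((Pform t x y)%:~R : R) =
  (x%:~R) ^+ 4 + 4 * t%:~R * (x%:~R) ^+ 3 * y%:~R - 6 * t%:~R * (x%:~R) ^+ 2 * (y%:~R) ^+ 2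
  - 4 * (t%:~R) ^+ 2 * x%:~R * (y%:~R) ^+ 3 + (t%:~R) ^+ 2 * (y%:~R) ^+ 4.
Proof.
rewrite /Pform !(rmorphD, rmorphB, rmorphN, rmorphM, rmorphXn, rmorph1) /=; ring.
Qed.

Lemma t1 (R : rcfType) (X Y s : R) : 4%:R * (1 + 'i * s%:C) * (X%:C - 'i * s%:C * Y%:C) ^+ 4 -
   4%:R * (-1 + 'i * s%:C) * (X%:C + 'i * s%:C * Y%:C) ^+ 4 =
   (8 * (X^+4 + 4 * s^+2 * X^+3 * Y - 6 * s^+2 * X^+2 * Y^+2 - 4 * s^+4 * X * Y^+3 + s^+4 * Y^+4))%:C.
Proof.
rewrite !exprS expr0.
by apply/eqP; rewrite eq_complex /=; apply/andP; split; apply/eqP; ring.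
Qed.

Lemma sqrt2C4 (R : realType) : sqrt2C R ^+ 4 = 4.
Proof.
rewrite /sqrt2C -rmorphXn.
have -> : Num.sqrt (2 : R) ^+ 4 = 4.
  rewrite -[4%N]/(2 * 2)%N exprM sqr_sqrtr //; lra.
by rewrite rmorph_nat.
Qed.

Theorem lemma3p2 (R : realType) (t : int) (alpha beta : R[i]) (x y : int)
  (omega : R[i]) :
  204 < t ->
  alpha ^+ 4 = 1 + 'i * sqrtt R t ->
  beta ^+ 4 = -1 + 'i * sqrtt R t ->
  0 < x -> 0 < y ->
  0 < Pform t x y -> Pform t x y <= t ^+ 2 ->
  64 * t ^+ 3 < x * y ->
  omega \in [:: 1; 'i; -1; - 'i] ->
  (forall k : 'I_4,
     `|omega - etaC t beta x y / xiC t alpha x y|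
       <= `|'i ^+ k - etaC t beta x y / xiC t alpha x y|) ->
  `|omega - etaC t beta x y / xiC t alpha x y|
    < (pi / 12 : R)%:C * `|zC t alpha beta x y|.
Proof.
move=> ht ha hb hx hy hP0 hP1 hxy hom hmin.
have hPR := hPR R t x y.
set tR : R := t%:~R. set X : R := x%:~R. set Y : R := y%:~R.
set PR : R := (Pform t x y)%:~R.
have htR : 204 < tR by rewrite /tR (ltr_int R 204 t).
have hX : 0 < X by rewrite /X ltr0z.
have hY : 0 < Y by rewrite /Y ltr0z.
have hP0R : 0 < PR by rewrite /PR ltr0z.
have hP1R : PR <= tR ^+ 2 by rewrite /PR /tR -rmorphXn ler_int.
have hxyR : 64 * tR ^+ 3 < X * Y.
  by move: hxy; rewrite -(ltr_int R) !(rmorphM, rmorphXn).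
set s : R := Num.sqrt tR.
have hs : s ^+ 2 = tR by rewrite sqr_sqrtr //; lra.
set A : R[i] := X%:C - 'i * s%:C * Y%:C.
set B : R[i] := X%:C + 'i * s%:C * Y%:C.
have exi : xiC t alpha x y = sqrt2C R * alpha * A by [].
have eeta : etaC t beta x y = sqrt2C R * beta * B by [].
have hxi4 : xiC t alpha x y ^+ 4 = 4 * (1 + 'i * s%:C) * A ^+ 4.
  by rewrite exi !exprMn ha sqrt2C4.
have heta4 : etaC t beta x y ^+ 4 = 4 * (-1 + 'i * s%:C) * B ^+ 4.
  by rewrite eeta !exprMn hb sqrt2C4.
have hdiff : xiC t alpha x y ^+ 4 - etaC t beta x y ^+ 4 = (8 * PR)%:C.
  rewrite hxi4 heta4 t1 /PR hPR -/tR -/X -/Y -hs; congr (_ %:C); ring.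
set Q : R := X ^+ 2 + tR * Y ^+ 2.
have nA : `|A| ^+ 2 = Q%:C.
  by rewrite -add_Re2_Im2 /= /Q -hs; congr (_ %:C); ring.
have nB : `|B| ^+ 2 = Q%:C.
  by rewrite -add_Re2_Im2 /= /Q -hs; congr (_ %:C); ring.
set m := `|1 + 'i * s%:C|.
have hm1 : 1 <= m.
  apply: le_trans (normc_ge_Re _); rewrite /=.
  have -> : (1 + (0 * s - 1 * 0) : R) = 1 by ring.
  by rewrite normr1.
have hm' : `|-1 + 'i * s%:C| = m.
  apply/eqP; rewrite /m -(@eqrXn2 _ 2) ?normr_ge0 // -!add_Re2_Im2 /=.
  by apply/eqP; congr (_ %:C); ring.
have nxi : `|xiC t alpha x y ^+ 4| = 4 * m * (Q ^+ 2)%:C.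
  by rewrite hxi4 normrM normrM normrX -/m (normr_nat _ 4) -[4%N]/(2 * 2)%N exprM nA rmorphXn.
have neta : `|etaC t beta x y ^+ 4| = 4 * m * (Q ^+ 2)%:C.
  by rewrite heta4 normrM normrM normrX hm' (normr_nat _ 4) -[4%N]/(2 * 2)%N exprM nB rmorphXn.
have hQ : 0 < Q by rewrite /Q; nra.
have nxi0 : 0 < `|xiC t alpha x y ^+ 4|.
  rewrite nxi; apply: mulr_gt0; first by apply: mulr_gt0 => //; apply: lt_le_trans hm1.
  by rewrite ltcR exprn_gt0.
have xi40 : xiC t alpha x y ^+ 4 != 0 by rewrite -normr_gt0.
have xi0 : xiC t alpha x y != 0 by apply: contra xi40 => /eqP ->; rewrite expr0n.
set w := etaC t beta x y / xiC t alpha x y.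
have hw4 : `|w| ^+ 4 = 1.
  by rewrite -normrX /w expr_div_n normrM normfV neta nxi divff // -nxi lt0r_neq0.
have hw : `|w| = 1.
  by apply/eqP; rewrite -(@eqrXn2 _ 4) // hw4 expr1n.
have ez : zC t alpha beta x y = (8 * PR)%:C / xiC t alpha x y ^+ 4.
  rewrite /zC -/w /w expr_div_n -hdiff.
  by field.
have nz : `|zC t alpha beta x y| = (8 * PR)%:C / `|xiC t alpha x y ^+ 4|.
  rewrite ez normrM normfV ger0_norm // ler0c; lra.
apply: (final (@pi_gt302 R)) => //.
- by rewrite -/(zC t alpha beta x y) nz divr_gt0 // ltcR; lra.
- rewrite -/(zC t alpha beta x y) nz ler_pdivrMr // nxi.
  apply: le_trans (_ : _ <= (1 / 10)%:C * (4 * 1 * (Q ^+ 2)%:C)) _.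
    have -> : (1 / 10 : R)%:C * (4 * 1 * (Q ^+ 2)%:C) = ((1 / 10) * (4 * Q ^+ 2))%:C.
      by rewrite mulr1 !rmorphM rmorph_nat.
    rewrite lecR.
    have h1 : 4 * tR * (X ^+ 2 * Y ^+ 2) <= Q ^+ 2.
      rewrite -subr_ge0 (_ : _ - _ = (X ^+ 2 - tR * Y ^+ 2) ^+ 2) ?sqr_ge0 // /Q; ring.
    have h2 : 4096 * tR ^+ 6 <= X ^+ 2 * Y ^+ 2.
      have h64 : 0 <= 64 * tR ^+ 3 by rewrite mulr_ge0 // exprn_ge0 //; lra.
      have := ler_pM h64 h64 (ltW hxyR) (ltW hxyR). 
      rewrite -!expr2 !exprMn.
      have e6 : tR ^+ 6 = tR ^+ 2 * (tR ^+ 2 * tR ^+ 2) by rewrite -!exprD.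
      rewrite e6; lra.
    have h3 : tR ^+ 6 = tR ^+ 2 * tR ^+ 2 * tR ^+ 2 by rewrite -!exprD.
    have h4 : 1 <= tR ^+ 2 by nra.
    have h5 : 1 <= tR ^+ 2 * tR ^+ 2 by nra.
    nra.
  apply: ler_wpM2l; first by rewrite ler0c; lra.
  apply: ler_wpM2r; first by rewrite ler0c exprn_ge0 // ltW.
  by apply: ler_wpM2l.
Qed.
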